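(* For every $n\in\mathbb N$, \[ \mathsf{HLS}_n\bigl(1,(X_C)_C\bigr)=\sum_{\varnothing\neq C_1\subsetneq C_2\subsetneq\dots\subsetneq C_\ell\subseteq[n]}\ \prod_{i=1}^\ell\frac{X_{C_i}}{1-X_{C_i}}, \] the sum including the empty chain ($\ell=0$, contributing $1$). In particular, setting all $X_C=X$, \[ \mathsf{HLS}_n(1,X)=\frac{E_n(X)}{(1-X)^n},\qquad E_n(X)=\sum_{w\in S_n}X^{\#\{i\in[n-1]:\,w(i+1)<w(i)\}}. \]
   Context: Hall–Littlewood–Schubert series: Let $[n]=\{1,\dots,n\}$. $\mathrm{SSYT}_n$ is the set of semistandard Young tableaux with entries in $[n]$ (including the empty one); a tableau is identified with its sequence of columns $(C_1,\dots,C_\ell)$, $C_j\subseteq[n]$ the set of entries of column $j$, and $T_{ij}$ is the entry in row $i$, column $j$. $T$ is reduced if its columns are pairwise distinct; $\mathrm{rSSYT}_n$ is the finite set of reduced tableaux. For cells $(i,j),(i,j+1)$ both in $T$, $\mathrm{Leg}^+_T(i,j)=C_j\cap\{T_{ij},\dots,T_{i,j+1}\}$ if $T_{i,j+1}\notin C_j$, else $\varnothing$ ($\varnothing$ if a cell is missing). $\Phi_T(Y)=\prod_{\mathrm{Leg}^+_T(i,j)\neq\varnothing}(1-Y^{\#\mathrm{Leg}^+_T(i,j)})$. For variables $\mathbf X=(X_C)_{\varnothing\ne C\subseteq[n]}$, $\mathsf{HLS}_n(Y,\mathbf X)=\sum_{T\in\mathrm{rSSYT}_n}\Phi_T(Y)\prod_{C\in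 T}\frac{X_C}{1-X_C}$; $\mathsf{HLS}_n(Y,(f_C)_C)$ denotes the substitution $X_C\mapsto f_C$. $S_n$ is the symmetric group on $[n]$. *)

(* Defs.v *)
From HB Require Import structures.
From mathcomp Require Import all_boot all_order all_algebra all_fingroup.
Set Implicit Arguments. Unset Strict Implicit. Unset Printing Implicit Defensive.
Import Order.TTheory GRing.Theory.
Local Open Scope ring_scope.

(* A tableau with entries in [n] (encoded as 'I_n, i.e. 0..n-1, order
   preserved) is given by its sequence of columns C_1,...,C_l (0-indexed). *)
Section HLS.
Variable n : nat.
Implicit Types (s : seq {set 'I_n}) (C : {set 'I_n}).

Definition col s (j : nat) : {set 'I_n} := nth set0 s j.

Definition entry s (i j : nat) : nat :=
  nth 0%N (sort leq [seq val x | x <- enum (col s j)]) i.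

Definition cell s (i j : nat) : bool := (j < size s)%N && (i < #|col s j|)%N.

(* semistandard Young tableau: nonempty columns (strict increase down a column
   is automatic for sets), weakly decreasing column lengths, weakly increasing
   rows *)
Definition is_SSYT s : bool :=
  all (fun C => C != set0) s &&
  all (fun j => (#|col s j.+1| <= #|col s j|)%N &&
                all (fun i => (entry s i j <= entry s i j.+1)%N)
                    (iota 0 #|col s j.+1|))
      (iota 0 (size s).-1).

Definition is_rSSYT s : bool := is_SSYT s && uniq s.

Definition leg s (i j : nat) : {set 'I_n} :=
  if cell s i j && cell s i j.+1 &&
     ~~ [exists x in col s j, val x == entry s i j.+1]
  then [set x in col s j | (entry s i j <= val x <= entry s i j.+1)%N]
  else set0.

Definition Phi {K : fieldType} s (Y : K) : K :=
  \prod_(j < size s) \prod_(i < n)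
     (if leg s i j != set0 then 1 - Y ^+ #|leg s i j| else 1).

(* HLS_n(Y, X): a reduced tableau has at most 2^n - 1 (distinct, nonempty)
   columns, so summing over tuples of length k < 2^n covers rSSYT_n. *)
Definition HLS {K : fieldType} (Y : K) (X : {set 'I_n} -> K) : K :=
  \sum_(k < 2 ^ n)
    \sum_(t : k.-tuple {set 'I_n} | is_rSSYT t)
      Phi t Y * \prod_(C <- t) (X C / (1 - X C)).

(* chains  emptyset <> C_1 < C_2 < ... < C_l  subseteq [n], represented by
   their underlying set of subsets *)
Definition is_chain (S : {set {set 'I_n}}) : bool :=
  (set0 \notin S) &&
  [forall A in S, forall B in S, (A \subset B) || (B \subset A)].

Definition des (w : 'S_n) : nat :=
  #|[set i : 'I_n | [exists j : 'I_n, (val j == (val i).+1) && (w j < w i)%N]]|.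

Definition Eulerian {K : fieldType} (x : K) : K :=
  \sum_(w : 'S_n) x ^+ des w.

End HLS.

(* Main.v *)
Require Import Defs.
From mathcomp Require Import all_boot all_order all_algebra all_fingroup.
From mathcomp Require Import zify ring.
Import GRing.Theory.
Set Implicit Arguments. Unset Strict Implicit. Unset Printing Implicit Defensive.

Section Bij.
Variable n : nat.
Implicit Types (S : {set {set 'I_n}}) (w : 'S_n) (p : 'S_n * {set 'I_n}).

Definition Des (w : 'S_n) : {set 'I_n} :=
  [set i : 'I_n | [exists j : 'I_n, (val j == (val i).+1) && (w j < w i)%N]].

Definition pre (w : 'S_n) (k : nat) : {set 'I_n} := w @: [set j : 'I_n | (j <= k)%N].

Lemma mem_pre w k x : (x \in pre w k) = (((w^-1)%g x : nat) <= k).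
Proof.
by rewrite /pre -{1}(permKV w x) mem_imset ?inE //; apply: perm_inj.
Qed.

Lemma card_ltset m : #|[set j : 'I_n | (j < m)%N]| = minn m n.
Proof.
have le : minn m n <= n by apply: geq_minr.
have -> : [set j : 'I_n | (j < m)%N] = [set widen_ord le i | i : 'I_(minn m n)].
  apply/setP => j; rewrite inE; apply/idP/imsetP.
    move=> hj; have hj' : (j < minn m n)%N by rewrite leq_min hj ltn_ord.
    by exists (Ordinal hj') => //; apply: val_inj.
  by case=> i _ ->; move: (ltn_ord i); rewrite /= leq_min => /andP[].
by rewrite card_imset ?card_ord //; move=> a b /(congr1 val) /= /val_inj.
Qed.

Lemma card_pre w (k : 'I_n) : #|pre w k| = k.+1.
Proof.
rewrite /pre card_imset; last by apply: perm_inj.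
have -> : [set j : 'I_n | (j <= k)%N] = [set j : 'I_n | (j < k.+1)%N] by [].
by rewrite card_ltset; apply/minn_idPl; apply: ltn_ord.
Qed.

Definition PhiB (p : 'S_n * {set 'I_n}) : {set {set 'I_n}} := [set pre p.1 (val k) | k in p.2].

Definition gS (S : {set {set 'I_n}}) (e : 'I_n) := #|[set C in S | e \notin C]|.
Definition key S (e : 'I_n) := gS S e * n + e.
Definition rank S (e : 'I_n) := #|[set e' | (key S e' < key S e)%N]|.

Lemma key_lt S a b : (gS S a < gS S b)%N -> (key S a < key S b)%N.
Proof. rewrite /key => h; have := ltn_ord a; nia. Qed.

Lemma key_eq S a b : gS S a = gS S b -> (key S a < key S b)%N = (a < b)%N.
Proof. rewrite /key => ->; lia. Qed.

Lemma key_inj S : injective (key S).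
Proof.
move=> a b; rewrite /key => h; apply: val_inj.
have := congr1 (modn^~ n) h; rewrite !modnMDl !modn_small //; apply: ltn_ord.
Qed.

Lemma rank_lt S e : (rank S e < n)%N.
Proof.
have : [set e' | (key S e' < key S e)%N] \proper [set: 'I_n].
  by apply/properP; split; [apply: subsetT | exists e; rewrite !inE ?ltnn].
by move/proper_card; rewrite cardsT card_ord.
Qed.

Lemma rank_mono S a b : (rank S a < rank S b)%N = (key S a < key S b)%N.
Proof.
have H : forall a b, (key S a < key S b)%N -> (rank S a < rank S b)%N.
  move=> x y h; apply: proper_card; apply/properP; split.
    by apply/subsetP => z; rewrite !inE => /ltn_trans; apply.
  by exists x; rewrite !inE ?ltnn.
case: (ltngtP (key S a) (key S b)) => h; first by apply: H.
  by apply/negbTE; rewrite -leqNgt ltnW // H.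
by rewrite (key_inj h) ltnn.
Qed.

Definition rk S e : 'I_n := Ordinal (rank_lt S e).

Lemma rk_inj S : injective (rk S).
Proof.
move=> a b /(congr1 val) /= h; apply: (@key_inj S).
case: (ltngtP (key S a) (key S b)) => // hk; move: hk;
  by rewrite -rank_mono h ltnn.
Qed.

Definition w0 S : 'S_n := ((perm (@rk_inj S))^-1)%g.
Definition A0 (S : {set {set 'I_n}}) : {set 'I_n} := [set k : 'I_n | [exists C in S, #|C| == k.+1]].
Definition Psi S := (w0 S, A0 S).

Lemma rank_w0 S j : rank S (w0 S j) = j.
Proof. by have := permKV (perm (@rk_inj S)) j; rewrite permE => /(congr1 val). Qed.

Lemma w0V S x : (((w0 S)^-1)%g x : nat) = rank S x.
Proof. by rewrite /w0 invgK permE. Qed.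


Lemma chainP S : is_chain S -> forall A B, A \in S -> B \in S -> (A \subset B) || (B \subset A).
Proof. by move=> /andP[_ /forall_inP h] A B hA hB; apply: (forall_inP (h A hA) B hB). Qed.

Lemma chain0 S : is_chain S -> set0 \notin S.
Proof. by case/andP. Qed.

Lemma chain_g S C e e' : is_chain S -> C \in S -> e \in C -> e' \notin C ->
  (gS S e < gS S e')%N.
Proof.
move=> hS hC he he'; apply: proper_card; apply/properP; split.
  apply/subsetP => D; rewrite !inE => /andP[hD heD]; rewrite hD /=.
  case/orP: (chainP hS hD hC) => sub.
    by apply/negP => /(subsetP sub); rewrite (negbTE he').
  by move: heD; rewrite (subsetP sub).
by exists C; rewrite !inE ?he ?he' ?hC.
Qed.

Lemma chain_rank S C e : is_chain S -> C \in S -> (rank S e < #|C|)%N = (e \in C).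
Proof.
move=> hS hC; case: (boolP (e \in C)) => he.
  have sub : [set e' | (key S e' < key S e)%N] \subset C :\ e.
    apply/subsetP => x; rewrite !inE => hx; apply/andP; split.
      by apply/negP => /eqP exe; move: hx; rewrite exe ltnn.
    apply/negPn/negP => hxC; have := key_lt (chain_g hS hC he hxC).
    by rewrite ltnNge (ltnW hx).
  by have := subset_leq_card sub; rewrite /rank (cardsD1 e C) he add1n ltnS => ->.
apply: negbTE; rewrite -leqNgt /rank; apply: subset_leq_card.
apply/subsetP => x hx; rewrite inE; apply: key_lt; exact: chain_g hS hC hx he.
Qed.

Lemma card_le_n (C : {set 'I_n}) : (#|C| <= n)%N.
Proof. by have := subset_leq_card (subsetT C); rewrite cardsT card_ord. Qed.

Lemma chain_card_gt0 S C : is_chain S -> C \in S -> (0 < #|C|)%N.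
Proof.
move=> hS hC; rewrite card_gt0; apply/negP => /eqP C0.
by move: (chain0 hS); rewrite -C0 hC.
Qed.

Lemma pre_w0 S C : is_chain S -> C \in S -> pre (w0 S) (#|C|.-1) = C.
Proof.
move=> hS hC; apply/setP => x; rewrite mem_pre w0V -(chain_rank _ hS hC).
have := chain_card_gt0 hS hC; lia.
Qed.

Lemma Phi_Psi S : is_chain S -> PhiB (Psi S) = S.
Proof.
move=> hS; apply/setP => C; apply/imsetP/idP.
  case=> k; rewrite inE => /exists_inP[D hD /eqP hcard] ->.
  have -> : val k = #|D|.-1 by rewrite hcard.
  by rewrite /= pre_w0.
move=> hC; have h0 := chain_card_gt0 hS hC.
have hk : (#|C|.-1 < n)%N by have := card_le_n C; lia.
exists (Ordinal hk); last by rewrite /= pre_w0.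
by rewrite inE; apply/exists_inP; exists C => //=; rewrite prednK.
Qed.

Lemma valid_Psi S : is_chain S -> Des (w0 S) \subset A0 S.
Proof.
move=> hS; apply/subsetP => i; rewrite inE => /existsP[j /andP[/eqP hj hlt]].
have hri := rank_w0 S i; have hrj := rank_w0 S j.
have hj' : (j : nat) = (i : nat).+1 := hj.
have hk : (key S (w0 S i) < key S (w0 S j))%N by rewrite -rank_mono; lia.
have hg : (gS S (w0 S i) < gS S (w0 S j))%N.
  case: ltngtP => // h.
    by have := key_lt h; lia.
  by move: hk; rewrite (key_eq h); lia.
have [D hD /andP[heD he'D]] : exists2 D, D \in S & (w0 S i \in D) && (w0 S j \notin D).
  apply/exists_inP; case: (boolP [exists D in S, (w0 S i \in D) && (w0 S j \notin D)]) => // hno.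
  suff : (gS S (w0 S j) <= gS S (w0 S i))%N by lia.
  apply: subset_leq_card; apply/subsetP => D; rewrite !inE => /andP[hD hjD].
  rewrite hD /=; apply/negP => hiD; apply: (negP hno); apply/exists_inP; exists D => //.
  by rewrite hiD.
have h1 := chain_rank (w0 S i) hS hD; have h2 := chain_rank (w0 S j) hS hD.
rewrite heD in h1; rewrite (negbTE he'D) in h2.
rewrite inE; apply/exists_inP; exists D => //; apply/eqP; lia.
Qed.


Lemma pre_sub w (k k' : nat) : (k <= k')%N -> pre w k \subset pre w k'.
Proof. by move=> h; apply/subsetP => x; rewrite !mem_pre => /leq_trans; apply. Qed.

Lemma chain_Phi p : is_chain (PhiB p).
Proof.
apply/andP; split.
  apply/imsetP => -[k _ h]; have : p.1 k \in pre p.1 k by rewrite mem_pre permK.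
  by rewrite -h inE.
apply/forall_inP => A /imsetP[k _ ->]; apply/forall_inP => B /imsetP[k' _ ->].
by case: (leqP k k') => h; [rewrite pre_sub | rewrite orbC pre_sub // ltnW].
Qed.

Lemma card_Phi p : #|PhiB p| = #|p.2|.
Proof.
apply: card_in_imset => k k' _ _ h.
have := congr1 (fun X : {set 'I_n} => #|X|) h; rewrite /= !card_pre => -[] /val_inj.
by [].
Qed.

Lemma card_perm_set w (P : pred 'I_n) : #|[set e | P e]| = #|[set a | P (w a)]|.
Proof.
rewrite -(card_imset _ (@perm_inj _ w)); apply: eq_card => x.
rewrite inE; apply/idP/imsetP.
  by move=> h; exists ((w^-1)%g x); rewrite ?inE permKV.
by case=> a; rewrite inE => h ->.
Qed.

Lemma notDes w (i j : 'I_n) : i \notin Des w -> val j = (val i).+1 -> (w i < w j)%N.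
Proof.
rewrite inE => /existsPn /(_ j); rewrite negb_and => h hj.
move: h; rewrite hj eqxx /= -leqNgt leq_eqVlt => /orP[/eqP h|//].
have /perm_inj ij := val_inj h; by move: hj; rewrite ij; lia.
Qed.

Lemma run w (a b : 'I_n) : (forall i : 'I_n, (a <= i < b)%N -> i \notin Des w) ->
  (a < b)%N -> (w a < w b)%N.
Proof.
move=> hD hab.
suff H : forall m (hm : (a + m.+1 < n)%N), (a + m.+1 <= b)%N -> (w a < w (Ordinal hm))%N.
  have hm : (a + (b - a - 1).+1 < n)%N by have := ltn_ord b; lia.
  have -> : b = Ordinal hm by apply: val_inj => /=; lia.
  apply: H => /=; lia.
elim=> [|m IH] hm hmb.
  apply: notDes => /=; last by rewrite addn1.
  by apply: hD; lia.
have hm' : (a + m.+1 < n)%N by lia.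
apply: (ltn_trans (IH hm' _)); first by lia.
apply: notDes => /=; last by rewrite addnS.
apply: hD => /=; lia.
Qed.

Lemma Psi_Phi p : Des p.1 \subset p.2 -> Psi (PhiB p) = p.
Proof.
case: p => w A /= hD.
set S := PhiB (w, A).
have hA : A0 S = A.
  apply/setP => k; rewrite inE; apply/exists_inP/idP.
    case=> C /imsetP[k' hk' ->] /eqP; rewrite card_pre => -[h].
    by have -> : k = k' by apply: val_inj.
  by move=> hk; exists (pre w k); [apply: imset_f | rewrite card_pre].
have memS : forall k : 'I_n, k \in A -> pre w k \in S.
  by move=> k hk; apply: imset_f.
have mono : forall a b : 'I_n, (a < b)%N -> (key S (w a) < key S (w b))%N.
  move=> a b hab.
  have sub : [set C in S | w a \notin C] \subset [set C in S | w b \notin C].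
    apply/subsetP => C; rewrite !inE => /andP[hC].
    case/imsetP: hC => k hk -> /=; rewrite !mem_pre !permK -!ltnNge => hk'.
    by rewrite (imset_f _ hk) /=; apply: ltn_trans hab.
  case: (ltngtP (gS S (w a)) (gS S (w b))) => hg.
  - exact: key_lt.
  - by have := subset_leq_card sub; rewrite -/(gS S (w a)) -/(gS S (w b)); lia.
  rewrite (key_eq hg); apply: run => // i /andP[hai hib].
  apply/negP => /(subsetP hD) hiA.
  have : pre w i \in [set C in S | w b \notin C].
    by rewrite inE memS //= mem_pre permK -ltnNge.
  have heq : [set C in S | w a \notin C] = [set C in S | w b \notin C].
    by apply/eqP; rewrite eqEcard sub /=; rewrite -/(gS S (w a)) -/(gS S (w b)) hg.
  by rewrite -heq inE mem_pre permK hai andbF.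
have hrank : forall j, rank S (w j) = j.
  move=> j; rewrite /rank (card_perm_set w).
  have -> : [set a | (key S (w a) < key S (w j))%N] = [set a : 'I_n | (a < j)%N].
    apply/setP => a; rewrite !inE; apply/idP/idP; last by apply: mono.
    by case: (ltngtP a j) => // h; [rewrite ltnNge ltnW // mono | rewrite (val_inj h) ltnn].
  by rewrite card_ltset; apply/minn_idPl/ltnW/ltn_ord.
have hw : w0 S = w.
  apply/permP => j.
  have h : perm (@rk_inj S) (w j) = j by rewrite permE; apply: val_inj; rewrite /= hrank.
  by rewrite /w0 -{1}h permK.
by rewrite /Psi hA hw.
Qed.

Lemma sum_chain_pairs (K : nmodType) (F : nat -> K) :
  (\sum_(S : {set {set 'I_n}} | is_chain S) F #|S| =
  \sum_(p : 'S_n * {set 'I_n} | Des p.1 \subset p.2) F #|p.2|)%R.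
Proof.
rewrite [RHS](reindex_onto (fun S => Psi S) PhiB); last by move=> p hp; apply: Psi_Phi.
apply: eq_big => S.
  apply/idP/idP; last by move=> /andP[_ /eqP <-]; apply: chain_Phi.
  by move=> hS; rewrite valid_Psi //= Phi_Psi.
by move=> hS; rewrite -card_Phi Phi_Psi.
Qed.

End Bij.

Lemma sorted_nth_le (lC lD : seq nat) i :
  sorted leq lC -> sorted leq lD -> uniq lC -> uniq lD -> {subset lD <= lC} ->
  (i < size lD)%N -> (nth 0 lC i <= nth 0 lD i)%N.
Proof.
move=> sC sD uC uD sub hi.
have hsz : (size lD <= size lC)%N by apply: uniq_leq_size.
set d := nth 0 lD i.
rewrite leqNgt; apply/negP => hlt.
have h1 : (i.+1 <= size [seq v <- lC | (v <= d)%N])%N.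
  have -> : i.+1 = size (take i.+1 lD) by rewrite size_takel.
  apply: uniq_leq_size; first exact: take_uniq.
  move=> v hv; have hvD := mem_take hv.
  rewrite mem_filter (sub _ hvD) andbT.
  rewrite in_take // in hv.
  rewrite -(nth_index 0 hvD) /d.
  have := sorted_leq_nth leq_trans leqnn 0 sD.
  move=> /(_ (index v lD) i); rewrite !inE index_mem hvD hi; apply=> //.
have h2 : (size [seq v <- lC | (v <= d)%N] <= i)%N.
  suff : (size [seq v <- lC | (v <= d)%N] <= size (take i lC))%N.
    by rewrite size_takel // ltnW // (leq_trans hi).
  apply: uniq_leq_size; first exact: filter_uniq.
  move=> v; rewrite mem_filter => /andP[hvd hvC].
  rewrite in_take //; rewrite ltnNge; apply/negP => hge.
  have := sorted_leq_nth leq_trans leqnn 0 sC.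
  move=> /(_ i (index v lC)); rewrite !inE index_mem hvC (leq_trans hi hsz) => /(_ isT isT hge).
  by rewrite nth_index //; lia.
lia.
Qed.

Section P1.
Variable n : nat.
Implicit Types (s : seq {set 'I_n}) (C D : {set 'I_n}).

Definition lst C := sort leq [seq val x | x <- enum C].
Definition ent C i := nth 0 (lst C) i.

Lemma entryE s i j : entry s i j = ent (Defs.col s j) i. Proof. by []. Qed.

Lemma size_lst C : size (lst C) = #|C|.
Proof. by rewrite /lst size_sort size_map cardE. Qed.

Lemma sorted_lst C : sorted leq (lst C).
Proof. exact: (sort_sorted leq_total). Qed.

Lemma uniq_lst C : uniq (lst C).
Proof. by rewrite /lst sort_uniq (map_inj_uniq val_inj) enum_uniq. Qed.

Lemma mem_lst C v : (v \in lst C) = [exists x in C, val x == v].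
Proof.
rewrite /lst mem_sort; apply/mapP/exists_inP.
  by case=> x; rewrite mem_enum => hx ->; exists x.
by case=> x hx /eqP <-; exists x; rewrite ?mem_enum.
Qed.

Lemma ent_mem C i : (i < #|C|)%N -> exists2 x, x \in C & val x = ent C i.
Proof.
rewrite -size_lst => hi; have := mem_nth 0 hi; rewrite mem_lst => /exists_inP[x hx /eqP h].
by exists x.
Qed.

Lemma ent_index C x : x \in C -> exists2 i, (i < #|C|)%N & ent C i = val x.
Proof.
move=> hx; have hv : val x \in lst C by rewrite mem_lst; apply/exists_inP; exists x.
exists (index (val x) (lst C)); first by rewrite -size_lst index_mem.
by rewrite /ent nth_index.
Qed.

Lemma ent_mono C D i : D \subset C -> (i < #|D|)%N -> (ent C i <= ent D i)%N.
Proof.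
move=> sub hi; apply: sorted_nth_le; rewrite ?sorted_lst ?uniq_lst ?size_lst //.
move=> v; rewrite !mem_lst => /exists_inP[x hx hv]; apply/exists_inP; exists x => //.
exact: (subsetP sub).
Qed.

Lemma card_le_n' C : (#|C| <= n)%N.
Proof. by have := subset_leq_card (subsetT C); rewrite cardsT card_ord. Qed.


Definition nested s := forall j, (j.+1 < size s)%N -> Defs.col s j.+1 \subset Defs.col s j.
Definition good s := all (fun C => C != set0) s && sorted (fun A B : {set 'I_n} => B \proper A) s.

Lemma SSYT_card s j : is_SSYT s -> (j.+1 < size s)%N ->
  (#|Defs.col s j.+1| <= #|Defs.col s j|)%N.
Proof.
case/andP => _ /allP /(_ j); rewrite mem_iota add0n => h hj.
by case/andP: (h ltac:(lia)).
Qed.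

Lemma SSYT_row s j i : is_SSYT s -> (j.+1 < size s)%N -> (i < #|Defs.col s j.+1|)%N ->
  (entry s i j <= entry s i j.+1)%N.
Proof.
case/andP => _ /allP /(_ j); rewrite mem_iota add0n => h hj hi.
case/andP: (h ltac:(lia)) => _ /allP; apply; rewrite mem_iota; lia.
Qed.

Lemma SSYT_intro s : all (fun C => C != set0) s -> nested s -> is_SSYT s.
Proof.
move=> hne hN; apply/andP; split => //; apply/allP => j; rewrite mem_iota add0n => hj.
have hj' : (j.+1 < size s)%N by lia.
apply/andP; split; first by apply: subset_leq_card; apply: hN.
apply/allP => i; rewrite mem_iota add0n => hi; rewrite !entryE.
by apply: ent_mono => //; apply: hN.
Qed.

Lemma nested_legs s : nested s -> forall i j, leg s i j = set0.
Proof.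
move=> hN i j; rewrite /leg; case: ifP => // /andP[/andP[_ /andP[hj hi]] hex].
have [x hx hxv] := ent_mem hi.
move: hex => /negP; case; apply/exists_inP; exists x.
  by apply: (subsetP (hN _ hj)).
by rewrite hxv.
Qed.

Lemma legs_nested s : is_SSYT s ->
  (forall (j : 'I_(size s)) (i : 'I_n), leg s i j == set0) -> nested s.
Proof.
move=> hS hL j hj; apply/subsetP => x hx.
have [i hi hix] := ent_index hx.
have hcard := SSYT_card hS hj.
have hin : (i < n)%N by have := card_le_n' (Defs.col s j.+1); lia.
have hjs : (j < size s)%N by lia.
have := hL (Ordinal hjs) (Ordinal hin); rewrite /leg /cell /= hjs hj hi (leq_trans hi hcard) /=.
case: ifP => hex.
  have [y hy hyv] := ent_mem (leq_trans hi hcard).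
  move/eqP/setP/(_ y); rewrite !inE hy /= {1}entryE -hyv leqnn /= hyv -entryE.
  by rewrite (SSYT_row hS hj hi).
move=> _; move/negbFE: hex => /exists_inP[y hy /eqP hyx].
by move: hy; have -> : y = x by apply: val_inj; rewrite /= hyx entryE hix.
Qed.

Lemma rSSYT_good s :
  (is_rSSYT s && [forall j : 'I_(size s), forall i : 'I_n, leg s i j == set0]) = good s.
Proof.
apply/idP/idP.
  case/andP => /andP[hS hu] /forallP hL.
  have hN : nested s by apply: legs_nested => // j i; apply: (forallP (hL j) i).
  apply/andP; split; first by case/andP: hS.
  apply/(sortedP set0) => j hj; rewrite properEneq hN // andbT.
  rewrite /Defs.col nth_uniq //; [by rewrite eqn_leq ltnn | exact: ltnW].
case/andP => hne hso.
have hN : nested s.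
  by move=> j hj; apply: proper_sub; move/(sortedP set0): (hso); apply.
apply/andP; split.
  apply/andP; split; first exact: SSYT_intro.
  apply: (sorted_uniq _ _ hso).
    by move=> y x z hxy hyz; apply: proper_trans hyz hxy.
  by move=> x; rewrite properxx.
by apply/forallP => j; apply/forallP => i; rewrite nested_legs.
Qed.

Lemma Phi1 (K : fieldType) s : Phi s (1 : K) =
  (if [forall j : 'I_(size s), forall i : 'I_n, leg s i j == set0] then 1 else 0)%R.
Proof.
rewrite /Phi; case: ifP => h.
  apply: big1 => j _; apply: big1 => i _.
  by rewrite (eqP (forallP (forallP h j) i)) eqxx.
move/negbT: h => /forallPn[j /forallPn[i hi]].
rewrite (bigD1 j) //= (bigD1 i) //= hi expr1n subrr !mul0r.
by [].
Qed.

End P1.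

Lemma sum_tuple_unique (T : finType) (R : nmodType) N (P : pred (seq T))
   (F : seq T -> R) s0 :
  (size s0 < N)%N -> (forall s, P s = (s == s0)) ->
  (\sum_(k < N) \sum_(t : k.-tuple T | P t) F t = F s0)%R.
Proof.
move=> hN hP; rewrite (bigD1 (Ordinal hN)) //= [X in (_ + X)%R]big1 ?addr0.
  rewrite (big_pred1 (in_tuple s0)) // => t; rewrite hP /=.
move=> k hk; apply: big_pred0 => t; rewrite hP; apply/negP => /eqP ht.
move/eqP: hk; apply; apply: val_inj; rewrite /= -ht size_tuple.
by [].
Qed.

Lemma sorted_strict (T : eqType) (r : rel T) (s : seq T) :
  uniq s -> sorted r s -> sorted (fun x y => r x y && (x != y)) s.
Proof.
elim: s => //= x [|y t] IH //= /andP[hx hu] /andP[hxy hp].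
apply/andP; split; last exact: IH.
rewrite hxy /=; apply/negP => /eqP exy; move: hx; rewrite exy inE eqxx.
by [].
Qed.

Section P2.
Variable n : nat.
Implicit Types (s : seq {set 'I_n}) (S : {set {set 'I_n}}).

Definition s0 S := sort (fun A B : {set 'I_n} => B \subset A) (enum S).

Lemma proper_rel_trans : transitive (fun A B : {set 'I_n} => B \proper A).
Proof. by move=> y x z hxy hyz; apply: proper_trans hyz hxy. Qed.

Lemma proper_rel_irr : irreflexive (fun A B : {set 'I_n} => B \proper A).
Proof. by move=> x; rewrite properxx. Qed.

Lemma chain_s0 S : is_chain S -> good (s0 S) /\ [set:: s0 S] = S.
Proof.
move=> hS; split; last by apply/setP => C; rewrite inE mem_sort mem_enum.
apply/andP; split.
  apply/allP => C; rewrite mem_sort mem_enum => hC.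
  by apply/negP => /eqP C0; move: (chain0 hS); rewrite -C0 hC.
have hso : sorted (fun A B : {set 'I_n} => B \subset A) (s0 S).
  apply: (sort_sorted_in (P := mem S)); last by apply/allP => C; rewrite mem_enum.
  by move=> A B hA hB /=; rewrite orbC; apply: (chainP hS hA hB).
have hu : uniq (s0 S) by rewrite sort_uniq enum_uniq.
apply: sub_sorted (sorted_strict hu hso) => A B /andP[hBA hne].
by rewrite properEneq hBA eq_sym hne.
Qed.

Lemma good_uniq s : good s -> uniq s.
Proof.
case/andP => _ hso; apply: (sorted_uniq proper_rel_trans proper_rel_irr hso).
Qed.

Lemma good_unique S s : is_chain S -> good s -> [set:: s] = S -> s = s0 S.
Proof.
move=> hS hg hs; have [hg0 hs0] := chain_s0 hS.
apply: (irr_sorted_eq proper_rel_trans proper_rel_irr).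
- by case/andP: hg.
- by case/andP: hg0.
move=> C; have := congr1 (fun X : {set {set 'I_n}} => C \in X) hs.
have := congr1 (fun X : {set {set 'I_n}} => C \in X) hs0.
by rewrite /= !inE => -> ->.
Qed.

Lemma good_chain s : good s -> is_chain [set:: s].
Proof.
case/andP => hne hso; apply/andP; split.
  by rewrite inE; apply/negP => h0; move/allP: hne => /(_ _ h0); rewrite eqxx.
apply/forall_inP => A; rewrite inE => hA; apply/forall_inP => B; rewrite inE => hB.
have hlt := sorted_ltn_nth proper_rel_trans set0 hso.
rewrite -(nth_index set0 hA) -(nth_index set0 hB).
have ha : index A s \in [pred i | (i < size s)%N] by rewrite inE index_mem.
have hb : index B s \in [pred i | (i < size s)%N] by rewrite inE index_mem.
case: (ltngtP (index A s) (index B s)) => h.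
- by rewrite orbC (proper_sub (hlt _ _ ha hb h)).
- by rewrite (proper_sub (hlt _ _ hb ha h)).
- by rewrite h subxx.
Qed.

Lemma card_chain_lt S : is_chain S -> (#|S| < 2 ^ n)%N.
Proof.
move=> hS; have : S \proper [set: {set 'I_n}].
  by apply/properP; split; [apply: subsetT | exists set0; rewrite ?inE // (negbTE (chain0 hS))].
by move/proper_card; rewrite -powersetT card_powerset cardsT card_ord.
Qed.

Lemma prod_good (R : comNzRingType) (h : {set 'I_n} -> R) s :
  good s -> (\prod_(C <- s) h C = \prod_(C in [set:: s]) h C)%R.
Proof.
move=> hg; rewrite big_uniq ?good_uniq //; apply: eq_bigl => C; by rewrite inE.
Qed.

Lemma part1 (K : fieldType) (X : {set 'I_n} -> K) :
  HLS 1 X = (\sum_(S : {set {set 'I_n}} | is_chain S) \prod_(C in S) (X C / (1 - X C)))%R.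
Proof.
rewrite /HLS.
set h := fun C : {set 'I_n} => (X C / (1 - X C))%R.
have E1 : forall k : 'I_(2 ^ n),
  (\sum_(t : k.-tuple {set 'I_n} | is_rSSYT t) Phi t 1 * \prod_(C <- t) (X C / (1 - X C)) =
   \sum_(t : k.-tuple {set 'I_n} | good t) \prod_(C <- t) h C)%R.
  move=> k; rewrite big_mkcond [RHS]big_mkcond; apply: eq_bigr => t _.
  rewrite Phi1 -(rSSYT_good t).
  by case: (is_rSSYT t); case: [forall _, _]; rewrite /= ?mul1r ?mul0r.
rewrite (eq_bigr _ (fun k _ => E1 k)); symmetry.
transitivity (\sum_(S : {set {set 'I_n}} | is_chain S) \sum_(k < 2 ^ n)
  \sum_(t : k.-tuple {set 'I_n} | good t && ([set:: t] == S)) \prod_(C <- t) h C)%R.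
  apply: eq_bigr => S hS; have [hg hs] := chain_s0 hS.
  have E := @sum_tuple_unique _ _ (2 ^ n) (fun s => good s && ([set:: s] == S))
     (fun s => \prod_(C <- s) h C)%R (s0 S).
  rewrite /= in E; rewrite E.
  - by rewrite prod_good // hs.
  - by rewrite size_sort -cardE card_chain_lt.
  move=> s; apply/andP/eqP => [[hgs /eqP hss]|->]; first exact: good_unique.
  by rewrite hg hs.
rewrite exchange_big; apply: eq_bigr => k _.
rewrite (exchange_big_dep (fun t : k.-tuple {set 'I_n} => good t)) /=; last by move=> S t _ /andP[].
apply: eq_bigr => t ht; rewrite (big_pred1 [set:: t]) // => S /=.
rewrite ht /=; apply/andP/eqP => [[_ /eqP <-] //|->]; split; last by [].
exact: good_chain.
Qed.

Lemma sum_supsets (R : comNzRingType) (D : {set 'I_n}) (y : R) :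
  (\sum_(A : {set 'I_n} | D \subset A) y ^+ #|A| = y ^+ #|D| * (1 + y) ^+ (n - #|D|))%R.
Proof.
pose f (i : 'I_n) (b : bool) : R := if b then y else (if i \in D then 0 else 1)%R.
have H := bigA_distr_bigA f.
have L : (\prod_(i : 'I_n) \sum_(b : bool) f i b = y ^+ #|D| * (1 + y) ^+ (n - #|D|))%R.
  rewrite (bigID (fun i => i \in D)) /=; congr (_ * _)%R.
    rewrite (eq_bigr (fun _ => y)); first by rewrite prodr_const.
    by move=> i hi; rewrite big_bool /= /f hi addr0.
  rewrite (eq_bigr (fun _ => 1 + y)%R); last first.
    by move=> i hi; rewrite big_bool /= /f (negbTE hi) addrC.
  rewrite prodr_const; congr (_ ^+ _)%R.
  have hc : (#|D| + #|[predC D]| = n)%N := etrans (cardC (mem D)) (card_ord n).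
  rewrite (@eq_card _ _ [predC D]) //; apply/eqP; rewrite -(eqn_add2l #|D|) hc subnKC ?card_le_n //.
rewrite -L H; symmetry.
rewrite (reindex (fun A : {set 'I_n} => [ffun i => i \in A])) /=; last first.
  apply: onW_bij; exists (fun phi : {ffun 'I_n -> bool} => [set i | phi i]).
    by move=> A; apply/setP => i; rewrite inE ffunE.
  by move=> phi; apply/ffunP => i; rewrite ffunE inE.
rewrite [RHS]big_mkcond; apply: eq_bigr => A _.
under eq_bigr do rewrite ffunE.
rewrite (bigID (fun i => i \in A)) /=.
rewrite (eq_bigr (fun _ => y)); last by move=> i ->.
rewrite prodr_const.
case: ifP => hDA.
  rewrite big1 ?mulr1 //; move=> i hi; rewrite (negbTE hi).
  rewrite /=; case: ifP => // hiD; by move: hi; rewrite (subsetP hDA _ hiD).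
move/negbT: hDA => /subsetPn[i hiD hiA].
by rewrite (bigD1 i) //= (negbTE hiA) /= hiD mul0r mulr0.
Qed.

End P2.
Local Open Scope ring_scope.

Lemma arith (K : fieldType) (x : K) (d n : nat) : 1 - x != 0 -> (d <= n)%N ->
  (x / (1 - x)) ^+ d * (1 + x / (1 - x)) ^+ (n - d) = x ^+ d / (1 - x) ^+ n.
Proof.
move=> hx hd.
have h1 : 1 + x / (1 - x) = (1 - x)^-1.
  by field.
rewrite h1 expr_div_n exprVn -mulrA -invfM -exprD subnKC //.
Qed.

Lemma part2 (K : fieldType) (n : nat) (x : K) : x != 1 ->
  HLS 1 (fun _ : {set 'I_n} => x) = Eulerian n x / (1 - x) ^+ n.
Proof.
move=> hx; have hx' : 1 - x != 0 by rewrite subr_eq0 eq_sym.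
rewrite part1.
under eq_bigr do rewrite prodr_const.
rewrite (@sum_chain_pairs n _ (fun k => (x / (1 - x)) ^+ k)).
rewrite -(pair_big_dep predT (fun (w : 'S_n) (A : {set 'I_n}) => Des w \subset A)
   (fun w A => (x / (1 - x)) ^+ #|A|)) /=.
rewrite /Eulerian mulr_suml; apply: eq_bigr => w _.
rewrite sum_supsets arith //; last exact: card_le_n.
Qed.

Theorem mainTheorem17 :
  forall (K : fieldType) (n : nat),
    (forall X : {set 'I_n} -> K,
        (forall C : {set 'I_n}, C != set0 -> X C != 1) ->
        HLS 1 X =
        \sum_(S : {set {set 'I_n}} | is_chain S) \prod_(C in S) (X C / (1 - X C)))
    /\
    (forall x : K, x != 1 ->
        HLS 1 (fun _ : {set 'I_n} => x) = Eulerian n x / (1 - x) ^+ n).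
Proof.
move=> K n; split; first by move=> X _; apply: part1.
exact: part2.
Qed.
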